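(* Let $\gamma_a,\gamma_s>0$, $\sigma_B>0$, $q>0$, $\lambda>0$, $\varepsilon_a\in(0,2)$, and let $\beta_s$ be the piecewise linear coalbedo described in the context. Then the system \[ \gamma_a T_a'=-\lambda(T_a-T_s)+\varepsilon_a\sigma_B|T_s|^3T_s-2\varepsilon_a\sigma_B|T_a|^3T_a,\qquad \gamma_s T_s'=-\lambda(T_s-T_a)-\sigma_B|T_s|^3T_s+\varepsilon_a\sigma_B|T_a|^3T_a+q\beta_s(T_s) \] has at least one equilibrium point.
   Context: The coalbedo is $\beta_s(T)=\beta_{s,-}$ for $T\le T_{s,-}$, $\beta_s(T)=\beta_{s,-}+(\beta_{s,+}-\beta_{s,-})\frac{T-T_{s,-}}{T_{s,+}-T_{s,-}}$ for $T\in[T_{s,-},T_{s,+}]$, and $\beta_s(T)=\beta_{s,+}$ for $T\ge T_{s,+}$, where $T_{s,+}>T_{s,-}>0$ and $\beta_{s,+}>\beta_{s,-}>0$. An equilibrium point is a point $(T_a,T_s)\in[0,\infty)^2$ at which both right-hand sides vanish. *)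

(* Defs.v *)
From Stdlib Require Import Reals.
Open Scope R_scope.

Definition coalbedo (Tm Tp bm bp T : R) : R :=
  if Rle_dec T Tm then bm
  else if Rle_dec Tp T then bp
  else bm + (bp - bm) * ((T - Tm) / (Tp - Tm)).

(* Right-hand sides of the two-layer energy balance system
   gamma_a Ta' = rhs_a, gamma_s Ts' = rhs_s. *)
Definition rhs_a (lam epsa sigB Ta Ts : R) : R :=
  - lam * (Ta - Ts) + epsa * sigB * (Rabs Ts ^ 3 * Ts)
  - 2 * epsa * sigB * (Rabs Ta ^ 3 * Ta).

Definition rhs_s (lam epsa sigB q Tm Tp bm bp Ta Ts : R) : R :=
  - lam * (Ts - Ta) - sigB * (Rabs Ts ^ 3 * Ts)
  + epsa * sigB * (Rabs Ta ^ 3 * Ta) + q * coalbedo Tm Tp bm bp Ts.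

(* Main.v *)
Require Import Defs.
From Stdlib Require Import Reals.
From Stdlib Require Import Lra Psatz Ranalysis5 ClassicalEpsilon FunctionalExtensionality.
Open Scope R_scope.

Lemma cplus (f g : R -> R) : continuity f -> continuity g -> continuity (fun x => f x + g x).
Proof. intros; exact (continuity_plus f g H H0). Qed.
Lemma cmult (f g : R -> R) : continuity f -> continuity g -> continuity (fun x => f x * g x).
Proof. intros; exact (continuity_mult f g H H0). Qed.
Lemma cminus (f g : R -> R) : continuity f -> continuity g -> continuity (fun x => f x - g x).
Proof. intros; exact (continuity_minus f g H H0). Qed.
Lemma cconst (c : R) : continuity (fun _ => c).
Proof. apply continuity_const. intros a b; reflexivity. Qed.
Lemma cid : continuity (fun x => x).
Proof. exact (derivable_continuous id derivable_id). Qed.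
Lemma ccomp (f g : R -> R) : continuity f -> continuity g -> continuity (fun x => f (g x)).
Proof. intros Hf Hg x. exact (continuity_pt_comp g f x (Hg x) (Hf (g x))). Qed.

Definition p (x : R) : R := Rabs x ^ 3 * x.

Lemma p_cont : continuity p.
Proof.
  unfold p. apply cmult; [|apply cid].
  apply (ccomp (fun y => y ^ 3) Rabs).
  - apply derivable_continuous, derivable_pow.
  - exact Rcontinuity_abs.
Qed.

Lemma p_nonneg x : 0 <= x -> p x = x ^ 4.
Proof. intros; unfold p; rewrite Rabs_right by lra; ring. Qed.

Lemma p_mono x y : x <= y -> p x <= p y.
Proof.
  intros H. unfold p.
  destruct (Rle_dec 0 x).
  - rewrite !Rabs_right by lra.
    assert (x ^ 4 <= y ^ 4) by (apply pow_incr; lra).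
    replace (x ^ 3 * x) with (x ^ 4) by ring.
    replace (y ^ 3 * y) with (y ^ 4) by ring. lra.
  - destruct (Rle_dec y 0).
    + rewrite !Rabs_left1 by lra.
      assert ((-y) ^ 4 <= (-x) ^ 4) by (apply pow_incr; lra).
      replace ((- x) ^ 3 * x) with (- (-x) ^ 4) by ring.
      replace ((- y) ^ 3 * y) with (- (-y) ^ 4) by ring. lra.
    + rewrite Rabs_left1 by lra. rewrite Rabs_right by lra.
      replace ((- x) ^ 3 * x) with (- (-x) ^ 4) by ring.
      replace (y ^ 3 * y) with (y ^ 4) by ring.
      assert (0 <= (-x)^4) by (apply pow_le; lra).
      assert (0 <= y^4) by (apply pow_le; lra). lra.
Qed.

Lemma p_sign_neg x : x <= 0 -> p x <= 0.
Proof. intros; pose proof (p_mono x 0 H). unfold p at 2 in H0. rewrite Rabs_R0 in H0. lra. Qed.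
Lemma p_sign_pos x : 0 <= x -> 0 <= p x.
Proof. intros; pose proof (p_mono 0 x H). unfold p at 1 in H0. rewrite Rabs_R0 in H0. lra. Qed.

Lemma clamp_eq (Tm Tp bm bp T : R) : Tm < Tp ->
  coalbedo Tm Tp bm bp T =
  bm + (bp - bm) * ((Rabs ((T - Tm) / (Tp - Tm)) - Rabs ((T - Tm) / (Tp - Tm) - 1) + 1) / 2).
Proof.
  intros H. unfold coalbedo.
  set (u := (T - Tm) / (Tp - Tm)).
  assert (Hu : u * (Tp - Tm) = T - Tm) by (unfold u; field; lra).
  destruct (Rle_dec T Tm).
  - assert (u <= 0) by nra.
    rewrite Rabs_left1 by lra. rewrite Rabs_left1 by lra. field.
  - destruct (Rle_dec Tp T).
    + assert (1 <= u) by nra.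
      rewrite Rabs_right by lra. rewrite Rabs_right by lra. field.
    + assert (0 <= u <= 1) by nra.
      rewrite Rabs_right by lra. rewrite Rabs_left1 by lra. field.
Qed.

Lemma coalbedo_cont (Tm Tp bm bp : R) : Tm < Tp -> continuity (coalbedo Tm Tp bm bp).
Proof.
  intros H. replace (coalbedo Tm Tp bm bp) with (fun T => bm + (bp - bm) * ((Rabs ((T - Tm) / (Tp - Tm)) - Rabs ((T - Tm) / (Tp - Tm) - 1) + 1) / 2)).
  2:{ apply functional_extensionality; intros T; symmetry; apply clamp_eq; exact H. }
  apply cplus; [apply cconst|]. apply cmult; [apply cconst|].
  unfold Rdiv at 3. apply cmult; [|apply cconst].
  apply cplus; [|apply cconst]. apply cminus.
  - apply (ccomp Rabs (fun T => (T - Tm) / (Tp - Tm))); [exact Rcontinuity_abs|].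
    unfold Rdiv. apply cmult; [|apply cconst]. apply cminus; [apply cid|apply cconst].
  - apply (ccomp Rabs (fun T => (T - Tm) / (Tp - Tm) - 1)); [exact Rcontinuity_abs|].
    apply cminus; [|apply cconst].
    unfold Rdiv. apply cmult; [|apply cconst]. apply cminus; [apply cid|apply cconst].
Qed.

Lemma coalbedo_le (Tm Tp bm bp T : R) : Tm < Tp -> bm < bp -> coalbedo Tm Tp bm bp T <= bp.
Proof.
  intros H Hb. rewrite clamp_eq by exact H.
  set (u := (T - Tm) / (Tp - Tm)).
  destruct (Rle_dec u 0).
  - rewrite Rabs_left1 by lra. rewrite Rabs_left1 by lra. nra.
  - destruct (Rle_dec 1 u).
    + rewrite Rabs_right by lra. rewrite Rabs_right by lra. nra.
    + rewrite Rabs_right by lra. rewrite Rabs_left1 by lra. nra.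
Qed.

Section Inv.
Variables (a c : R).
Hypothesis ha : 0 < a.
Hypothesis hc : 0 < c.

Definition kf (y : R) : R := a * y + c * p y.

Lemma kf_cont : continuity kf.
Proof. unfold kf. apply cplus; apply cmult; try apply cconst; try apply cid; apply p_cont. Qed.

Lemma kf_strict x y : x < y -> kf x < kf y.
Proof. intros H. unfold kf. pose proof (p_mono x y (Rlt_le _ _ H)). nra. Qed.

Lemma kf_le_inv x y : kf x <= kf y -> x <= y.
Proof. intros H. destruct (Rle_dec x y); auto. pose proof (kf_strict y x). lra. Qed.

Lemma kf_bounds M : 0 <= M -> kf (-M) <= - a * M /\ a * M <= kf M.
Proof.
  intros H. unfold kf. pose proof (p_sign_neg (-M)). pose proof (p_sign_pos M).
  split; nra.
Qed.

Lemma kf_surj s : exists y, kf y = s.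
Proof.
  set (M := Rabs s / a + 1).
  assert (HM : 0 <= Rabs s / a) by (unfold Rdiv; apply Rmult_le_pos; [apply Rabs_pos|left; apply Rinv_0_lt_compat; lra]).
  assert (HaM : a * M = Rabs s + a) by (unfold M; field; lra).
  destruct (kf_bounds M) as [H1 H2]; [unfold M; lra|].
  pose proof (Rle_abs s). pose proof (Rle_abs (-s)). rewrite Rabs_Ropp in H0.
  destruct (f_interv_is_interv kf (-M) M s) as [y [_ Hy]].
  - unfold M; lra.
  - nra.
  - intros; apply kf_cont.
  - exists y; exact Hy.
Qed.

Definition kinv (s : R) : R := epsilon (inhabits 0) (fun y => kf y = s).

Lemma kinv_spec s : kf (kinv s) = s.
Proof. unfold kinv. apply (epsilon_spec (inhabits 0) (fun y => kf y = s)). apply kf_surj. Qed.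

Lemma kinv_cont : continuity kinv.
Proof.
  intros b.
  set (M := Rabs b / a + 1).
  assert (HM : 0 <= Rabs b / a) by (unfold Rdiv; apply Rmult_le_pos; [apply Rabs_pos|left; apply Rinv_0_lt_compat; lra]).
  assert (HaM : a * M = Rabs b + a) by (unfold M; field; lra).
  destruct (kf_bounds M) as [H1 H2]; [unfold M; lra|].
  pose proof (Rle_abs b). pose proof (Rle_abs (-b)). rewrite Rabs_Ropp in H0.
  apply (continuity_pt_recip_interv kf kinv (-M) M).
  - unfold M; lra.
  - intros x y _ Hxy _. apply kf_strict; exact Hxy.
  - intros x _ _. unfold comp, id. apply kinv_spec.
  - intros x Hx1 Hx2. split; apply kf_le_inv; rewrite kinv_spec; lra.
  - intros; apply kf_cont.
  - nra.
Qed.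

End Inv.

Theorem lemma6p1 (gamma_a gamma_s sigB q lam epsa Tm Tp bm bp : R)
  (hga : 0 < gamma_a) (hgs : 0 < gamma_s) (hsig : 0 < sigB) (hq : 0 < q)
  (hlam : 0 < lam) (heps0 : 0 < epsa) (heps2 : epsa < 2)
  (hTm : 0 < Tm) (hT : Tm < Tp) (hbm : 0 < bm) (hb : bm < bp) :
  exists Ta Ts : R, 0 <= Ta /\ 0 <= Ts /\
    rhs_a lam epsa sigB Ta Ts = 0 /\
    rhs_s lam epsa sigB q Tm Tp bm bp Ta Ts = 0.
Proof.
  assert (hc1 : 0 < epsa * sigB) by nra.
  assert (hc2 : 0 < 2 * epsa * sigB) by nra.
  set (h := fun x => kinv lam (epsa * sigB) (kf lam (2 * epsa * sigB) x)).
  assert (Hh : forall x, kf lam (epsa * sigB) (h x) = kf lam (2 * epsa * sigB) x).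
  { intros; unfold h; apply kinv_spec; auto. }
  set (G := fun x => - (- lam * (h x - x) - sigB * p (h x) + epsa * sigB * p x
                     + q * coalbedo Tm Tp bm bp (h x))).
  assert (HG : continuity G).
  { unfold G. apply (ccomp Ropp); [apply continuity_opp, cid|].
    apply cplus; [apply cplus; [apply cminus|]|].
    - apply cmult; [apply cconst|]. apply cminus; [|apply cid].
      unfold h. apply ccomp; [apply kinv_cont; auto|apply kf_cont].
    - apply cmult; [apply cconst|]. apply ccomp; [apply p_cont|].
      unfold h. apply ccomp; [apply kinv_cont; auto|apply kf_cont].
    - apply cmult; [apply cconst|apply p_cont].
    - apply cmult; [apply cconst|]. apply ccomp; [apply coalbedo_cont; auto|].
      unfold h. apply ccomp; [apply kinv_cont; auto|apply kf_cont]. }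
  assert (Hpos : forall x, 0 <= x -> 0 <= h x).
  { intros x Hx. apply (kf_le_inv lam (epsa*sigB) hlam hc1). rewrite Hh.
    assert (Z : kf lam (epsa * sigB) 0 = 0) by (unfold kf, p; rewrite Rabs_R0; ring).
    rewrite Z. unfold kf. pose proof (p_sign_pos x Hx). nra. }
  set (A := 1 + q * bp / (sigB * (2 - epsa)) + q * bp / sigB).
  assert (HA1 : 0 <= q * bp / (sigB * (2 - epsa))).
  { unfold Rdiv; apply Rmult_le_pos; [nra|left; apply Rinv_0_lt_compat; nra]. }
  assert (HA2 : 0 <= q * bp / sigB).
  { unfold Rdiv; apply Rmult_le_pos; [nra|left; apply Rinv_0_lt_compat; nra]. }
  assert (HA : 1 <= A) by (unfold A; lra).
  assert (HG0 : G 0 < 0).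
  { assert (h0 : h 0 = 0).
    { pose proof (Hh 0) as H.
      assert (Z : forall c, kf lam c 0 = 0) by (intros; unfold kf, p; rewrite Rabs_R0; ring).
      rewrite Z in H.
      apply Rle_antisym; apply (kf_le_inv lam (epsa*sigB) hlam hc1); rewrite ?H, ?Z; lra. }
    unfold G. rewrite h0. unfold p, coalbedo. rewrite Rabs_R0.
    destruct (Rle_dec 0 Tm); [|lra]. nra. }
  assert (HGA : 0 < G A).
  { set (Ts := h A).
    assert (HTs : 0 <= Ts) by (apply Hpos; lra).
    assert (E := Hh A). fold Ts in E. unfold kf in E.
    rewrite (p_nonneg Ts HTs), (p_nonneg A) in E by lra.
    assert (HATs : A <= Ts).
    { apply (kf_le_inv lam (epsa*sigB) hlam hc1). unfold Ts. rewrite Hh. unfold kf.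
      rewrite !p_nonneg by lra. assert (0 <= A^4) by (apply pow_le; lra). nra. }
    assert (H4 : A ^ 4 <= Ts ^ 4) by (apply pow_incr; lra).
    assert (HA4 : A <= A ^ 4).
    { replace (A ^ 4) with (A * (A * A * A)) by ring.
      assert (1 <= A * A) by nra. assert (1 <= A * A * A) by nra. nra. }
    assert (Hbeta := coalbedo_le Tm Tp bm bp Ts hT hb).
    assert (Hq1 : q * bp < sigB * (2 - epsa) * A).
    { assert (q * bp = sigB * (2 - epsa) * (q * bp / (sigB * (2 - epsa)))) by (field; nra).
      assert (0 < sigB * (2 - epsa)) by nra. unfold A. nra. }
    assert (Hq2 : q * bp < sigB * A).
    { assert (q * bp = sigB * (q * bp / sigB)) by (field; nra). unfold A. nra. }
    unfold G. fold Ts. rewrite (p_nonneg Ts HTs), (p_nonneg A) by lra.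
    assert (HD : lam * (Ts - A) <= epsa * sigB * A ^ 4) by nra.
    assert (Hqb : q * coalbedo Tm Tp bm bp Ts <= q * bp) by nra.
    assert (K : epsa * (- lam * (Ts - A) - sigB * Ts ^ 4 + epsa * sigB * A ^ 4 +
       q * coalbedo Tm Tp bm bp Ts) =
       (1 - epsa) * (lam * (Ts - A)) - epsa * (2 - epsa) * sigB * A ^ 4
       + epsa * q * coalbedo Tm Tp bm bp Ts) by nra.
    assert (Hm1 : sigB * (2 - epsa) * A <= sigB * (2 - epsa) * A ^ 4).
    { apply Rmult_le_compat_l; [nra|lra]. }
    assert (Hm2 : sigB * A <= sigB * A ^ 4) by (apply Rmult_le_compat_l; lra).
    assert (Heq : epsa * q * coalbedo Tm Tp bm bp Ts <= epsa * (q * bp)) by nra.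
    assert (X : epsa * (- lam * (Ts - A) - sigB * Ts ^ 4 + epsa * sigB * A ^ 4 +
       q * coalbedo Tm Tp bm bp Ts) < 0).
    { rewrite K. destruct (Rle_dec epsa 1).
      - assert ((1 - epsa) * (lam * (Ts - A)) <= (1 - epsa) * (epsa * sigB * A ^ 4)) by nra.
        assert (epsa * (q * bp) < epsa * (sigB * A)) by nra.
        assert (epsa * (sigB * A) <= epsa * (sigB * A ^ 4)) by (apply Rmult_le_compat_l; lra).
        nra.
      - apply Rnot_le_lt in n.
        assert (0 <= lam * (Ts - A)) by (apply Rmult_le_pos; lra).
        assert ((1 - epsa) * (lam * (Ts - A)) <= 0) by nra.
        assert (epsa * (q * bp) < epsa * (sigB * (2 - epsa) * A)) by nra.
        assert (epsa * (sigB * (2 - epsa) * A) <= epsa * (sigB * (2 - epsa) * A ^ 4)) by (apply Rmult_le_compat_l; lra).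
        nra. }
    set (Y := - lam * (Ts - A) - sigB * Ts ^ 4 + epsa * sigB * A ^ 4 +
       q * coalbedo Tm Tp bm bp Ts) in X.
    assert (Y < 0) by nra. unfold Y in H. lra. }
  destruct (IVT_interv G 0 A (fun a _ => HG a)) as [z [Hz HGz]]; [lra|exact HG0|exact HGA|].
  exists z, (h z). split; [lra|]. split; [apply Hpos; lra|]. split.
  - unfold rhs_a. pose proof (Hh z). unfold kf, p in H. lra.
  - unfold rhs_s. unfold G, p in HGz. lra.
Qed.
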